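(* For all $x\in\mathbb{R}^n$, $\lambda\in\mathbb{R}^m$ with $x_i\ge0$ for $i\in[n_b]$ and $\lambda_j\ge0$ for $j\in[m_I]$, $$\operatorname{dist}((x,\lambda),\Omega)\le\theta\big(\|(x,\lambda)\|^2+1\big)^{1/2}\operatorname{dist}(0,T_\ell(x,\lambda)).$$
   Context: LP: $\min_{x\in\mathbb{R}^n}c^\top x$ s.t. $A_Ix\le b_I$, $A_Ex=b_E$, $x_1,\dots,x_{n_b}\ge0$, where $A_I\in\mathbb{R}^{m_I\times n}$, $A_E\in\mathbb{R}^{m_E\times n}$, $m=m_I+m_E$, $A=[A_I;A_E]$, $b=[b_I;b_E]$, $n_b\in[n]$. Write $x_b=(x_1,\dots,x_{n_b})$, $\lambda_I=(\lambda_1,\dots,\lambda_{m_I})$. For $v\in\mathbb{R}^N$ and $k\le N$, $[v]_+^k$ (resp. $[v]_-^k$) is the projection of $v$ onto $\mathbb{R}_+^k\times\mathbb{R}^{N-k}$ (resp. $\mathbb{R}_-^k\times\mathbb{R}^{N-k}$). $T_\ell(x,\lambda)=\{(v,u)\in\mathbb{R}^{n+m}: v\in c+A^\top\lambda+N_{\{x_b\ge0\}}(x),\ u\in b-Ax+N_{\{\lambda_I\ge0\}}(\lambda)\}$, where $N_S$ denotes the normal cone of the convex set $S$ (empty outside $S$); $\operatorname{dist}(0,\emptyset)=+\infty$. Assume the LP has an optimal solution, so that $\Omega:=T_\ell^{-1}(0,0)=\{(x,\lambda):x_b\ge0,\lambda_I\ge0,\ c^\top x+b^\top\lambda=0,\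 [A^\top\lambda+c]_-^{n_b}=0,\ [Ax-b]_+^{m_I}=0\}$ is nonempty. $\theta$ is the smallest constant such that $\operatorname{dist}((x,\lambda),\Omega)\le\theta\|[c^\top x+b^\top\lambda;\ [A^\top\lambda+c]_-^{n_b};\ [Ax-b]_+^{m_I}]\|$ for all $(x,\lambda)$ with $x_b\ge0$, $\lambda_I\ge0$. Norms and distances are Euclidean. *)

(* Defs.v *)
From HB Require Import structures.
From mathcomp Require Import all_boot all_order all_algebra.
From mathcomp Require Import classical_sets boolp reals ereal.
Set Implicit Arguments. Unset Strict Implicit. Unset Printing Implicit Defensive.
Import Order.TTheory GRing.Theory Num.Theory.
Local Open Scope ring_scope.
Local Open Scope classical_set_scope.

Section LPDefs.
Variable R : realType.

Definition vnorm (k : nat) (v : 'cV[R]_k) : R :=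
  Num.sqrt (\sum_(i < k) v i 0 ^+ 2).

Definition pnorm (n m : nat) (x : 'cV[R]_n) (l : 'cV[R]_m) : R :=
  Num.sqrt (\sum_(i < n) x i 0 ^+ 2 + \sum_(j < m) l j 0 ^+ 2).

(* Euclidean distance from a point to a set of pairs; +oo for the empty set *)
Definition pdist (n m : nat) (p : 'cV[R]_n * 'cV[R]_m)
    (S : set ('cV[R]_n * 'cV[R]_m)) : \bar R :=
  ereal_inf [set (pnorm (p.1 - q.1) (p.2 - q.2))%:E | q in S].

(* normal cone of a convex set S at x (empty if x is not in S) *)
Definition normal_cone (k : nat) (S : set 'cV[R]_k) (x : 'cV[R]_k)
    : set 'cV[R]_k :=
  [set v | S x /\ forall y, S y -> (v^T *m (y - x)) 0 0 <= 0].

Definition nonneg_first (k kb : nat) : set 'cV[R]_k :=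
  [set x | forall i : 'I_k, (i < kb)%N -> 0 <= x i 0].

Definition proj_plus (k kb : nat) (v : 'cV[R]_k) : 'cV[R]_k :=
  \col_i (if (i < kb)%N then Num.max (v i 0) 0 else v i 0).
Definition proj_minus (k kb : nat) (v : 'cV[R]_k) : 'cV[R]_k :=
  \col_i (if (i < kb)%N then Num.min (v i 0) 0 else v i 0).

Variables (n nb mI mE : nat).
Variables (A : 'M[R]_(mI + mE, n)) (b : 'cV[R]_(mI + mE)) (c : 'cV[R]_n).

Definition T_l (x : 'cV[R]_n) (l : 'cV[R]_(mI + mE))
    : set ('cV[R]_n * 'cV[R]_(mI + mE)) :=
  [set vu | normal_cone (@nonneg_first n nb) x (vu.1 - (c + A^T *m l))
         /\ normal_cone (@nonneg_first (mI + mE) mI) l (vu.2 - (b - A *m x))].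

Definition Omega : set ('cV[R]_n * 'cV[R]_(mI + mE)) :=
  [set p | T_l p.1 p.2 (0, 0)].

Definition lp_feasible (x : 'cV[R]_n) : Prop :=
  @nonneg_first n nb x /\
  (forall i : 'I_(mI + mE), (i < mI)%N -> (A *m x) i 0 <= b i 0) /\
  (forall i : 'I_(mI + mE), (mI <= i)%N -> (A *m x) i 0 = b i 0).

Definition lp_has_optimal : Prop :=
  exists x, lp_feasible x /\ forall y, lp_feasible y -> (c^T *m x) 0 0 <= (c^T *m y) 0 0.

Definition residual (x : 'cV[R]_n) (l : 'cV[R]_(mI + mE)) : R :=
  Num.sqrt (((c^T *m x) 0 0 + (b^T *m l) 0 0) ^+ 2
            + vnorm (@proj_minus n nb (A^T *m l + c)) ^+ 2
            + vnorm (@proj_plus (mI + mE) mI (A *m x - b)) ^+ 2).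

Definition error_bound_const (t : R) : Prop :=
  forall x l, @nonneg_first n nb x -> @nonneg_first (mI + mE) mI l ->
    (pdist (x, l) Omega <= (t * residual x l)%:E)%E.

End LPDefs.

(* Main.v *)
Require Import Defs.
From HB Require Import structures.
From mathcomp Require Import all_boot all_order all_algebra.
From mathcomp Require Import classical_sets boolp reals ereal.
From mathcomp Require Import ring lra.
Import Order.TTheory GRing.Theory Num.Theory.
Local Open Scope ring_scope.

Lemma sum_sq_expand (R : realType) (I : finType) (a b : I -> R) p q :
  \sum_i (p * a i - q * b i)^+2 =
  p^+2 * \sum_i a i^+2 - 2 * p * q * \sum_i (a i * b i) + q^+2 * \sum_i b i ^+2.
Proof.
rewrite !mulr_sumr -sumrB -big_split /=; apply: eq_bigr => i _; ring.
Qed.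

Lemma sumsq0 (R : realType) (I : finType) (b : I -> R) :
  \sum_i b i ^+ 2 = 0 -> forall i, b i = 0.
Proof.
move=> H i; have /psumr_eq0P H' := H.
have : b i ^+ 2 = 0 by apply: H' => // j _; exact: sqr_ge0.
by move/eqP; rewrite sqrf_eq0 => /eqP.
Qed.

Lemma CS2 (R : realType) (I J : finType) (a b : I -> R) (c d : J -> R) :
  (\sum_i (a i * b i) + \sum_j (c j * d j))^+2 <=
  (\sum_i a i ^+ 2 + \sum_j c j ^+ 2) * (\sum_i b i ^+ 2 + \sum_j d j ^+ 2).
Proof.
set P1 := \sum_i a i ^+ 2; set P2 := \sum_j c j ^+ 2.
set Q1 := \sum_i b i ^+ 2; set Q2 := \sum_j d j ^+ 2.
set S1 := \sum_i (a i * b i); set S2 := \sum_j (c j * d j).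
have hQ1 : 0 <= Q1 by apply: sumr_ge0 => i _; exact: sqr_ge0.
have hQ2 : 0 <= Q2 by apply: sumr_ge0 => i _; exact: sqr_ge0.
have hP1 : 0 <= P1 by apply: sumr_ge0 => i _; exact: sqr_ge0.
have hP2 : 0 <= P2 by apply: sumr_ge0 => i _; exact: sqr_ge0.
have h1 : 0 <= \sum_i ((Q1 + Q2) * a i - (S1 + S2) * b i) ^+ 2
   by apply: sumr_ge0 => i _; exact: sqr_ge0.
have h2 : 0 <= \sum_j ((Q1 + Q2) * c j - (S1 + S2) * d j) ^+ 2
   by apply: sumr_ge0 => i _; exact: sqr_ge0.
rewrite !sum_sq_expand -/P1 -/P2 -/Q1 -/Q2 -/S1 -/S2 in h1 h2.
have [hQ0|hQpos] := eqVneq (Q1 + Q2) 0.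
  have q1 : Q1 = 0 by lra.
  have q2 : Q2 = 0 by lra.
  have s1 : S1 = 0.
    by rewrite /S1 big1 // => i _; rewrite (@sumsq0 _ _ b q1) mulr0.
  have s2 : S2 = 0.
    by rewrite /S2 big1 // => i _; rewrite (@sumsq0 _ _ d q2) mulr0.
  by rewrite s1 s2 q1 q2; lra.
have hQ : 0 < Q1 + Q2 by rewrite lt_def hQpos /=; lra.
nra.
Qed.
Lemma dot_delta (R : realType) k (w : 'cV[R]_k) i :
  (w^T *m delta_mx i (0 : 'I_1)) 0 0 = w i 0.
Proof. by rewrite -colE !mxE. Qed.

Lemma oppmxE (R : realType) p q (B : 'M[R]_(p,q)) i j : (- B) i j = - B i j.
Proof. by rewrite mxE. Qed.

Lemma nc_prop (R : realType) k kb (x w : 'cV[R]_k) :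
  normal_cone (@nonneg_first R k kb) x w ->
  [/\ (forall i : 'I_k, (i < kb)%N -> w i 0 <= 0),
      (forall i : 'I_k, ~~ (i < kb)%N -> w i 0 = 0) &
      (w^T *m x) 0 0 = 0].
Proof.
move=> [Hx H].
have H1 : forall e, nonneg_first kb (x + e) -> (w^T *m e) 0 0 <= 0.
  by move=> e /H; rewrite addrAC subrr add0r.
have Hall : forall i : 'I_k, w i 0 <= 0.
  move=> i; rewrite -dot_delta; apply: H1 => j Hj.
  rewrite !mxE; apply: addr_ge0; first exact: Hx.
  by case: (_ && _).
split => //.
- move=> i Hi; apply/eqP; rewrite eq_le Hall /=.
  have -> : w i 0 = - (w^T *m (- delta_mx i (0 : 'I_1))) 0 0
    by rewrite mulmxN oppmxE opprK dot_delta.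
  rewrite oppr_ge0; apply: H1 => j Hj.
  rewrite !mxE.
  have -> : (j == i) = false.
    by apply/negbTE; apply: contraNneq Hi => <-.
  by rewrite /= subr0; apply: Hx.
- apply/eqP; rewrite eq_le; apply/andP; split.
    by apply: H1 => j Hj; rewrite !mxE; apply: addr_ge0; apply: Hx.
  have -> : (w^T *m x) 0 0 = - (w^T *m (- x)) 0 0 by rewrite mulmxN oppmxE opprK.
  rewrite oppr_ge0; apply: H1 => j Hj.
  by rewrite subrr mxE.
Qed.

Lemma addmxE0 (R : realType) p q (B C : 'M[R]_(p,q)) i j : (B + C) i j = B i j + C i j.
Proof. by rewrite mxE. Qed.

Lemma key_bound (R : realType) (n nb mI mE : nat)
  (A : 'M[R]_(mI + mE, n)) (b : 'cV[R]_(mI + mE)) (c : 'cV[R]_n)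
  (x : 'cV[R]_n) (l : 'cV[R]_(mI + mE)) v u :
  T_l nb A b c x l (v, u) ->
  residual nb A b c x l <= pnorm v u * Num.sqrt (pnorm x l ^+ 2 + 1).
Proof.
move=> [/= Hw Hz].
set w := v - (c + A^T *m l) in Hw.
set z := u - (b - A *m x) in Hz.
have [hw1 hw2 hw3] := @nc_prop _ _ _ _ _ Hw.
have [hz1 hz2 hz3] := @nc_prop _ _ _ _ _ Hz.
have ec : c = v - w - A^T *m l.
  by rewrite /w; apply/matrixP => i j; rewrite !mxE; lra.
have eb : b = u - z + A *m x.
  by rewrite /z; apply/matrixP => i j; rewrite !mxE; lra.
have e1 : (c^T *m x) 0 0 + (b^T *m l) 0 0 = (v^T *m x) 0 0 + (u^T *m l) 0 0.
  have t1 : (A^T *m l)^T *m x = l^T *m (A *m x) by rewrite trmx_mul trmxK mulmxA.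
  have t2 : (A *m x)^T *m l = (l^T *m (A *m x))^T by rewrite [RHS]trmx_mul trmxK.
  clearbody w z; rewrite ec eb !raddfB raddfD /= !mulmxBl mulmxDl t1 t2.
  rewrite !addmxE0 !oppmxE hw3 raddfB /= mulmxBl addmxE0 oppmxE hz3 [(_^T) 0 0]mxE.
  lra.
have sq0 : forall k (f : 'I_k -> R), 0 <= \sum_i f i ^+ 2.
  by move=> k f; apply: sumr_ge0 => i _; exact: sqr_ge0.
have hpm : \sum_i (proj_minus nb (A^T *m l + c)) i 0 ^+ 2 <= \sum_i v i 0 ^+ 2.
  apply: ler_sum => i _; rewrite mxE.
  have -> : (A^T *m l + c) i 0 = v i 0 - w i 0 by rewrite /w !mxE; lra.
  case: ifP => hi.
    have := hw1 i hi; rewrite minEle; case: ifP => h1 h2; nra.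
  by rewrite hw2 ?hi // subr0.
have hpp : \sum_i (proj_plus mI (A *m x - b)) i 0 ^+ 2 <= \sum_i u i 0 ^+ 2.
  apply: ler_sum => i _; rewrite mxE.
  have -> : (A *m x - b) i 0 = z i 0 - u i 0 by rewrite /z !mxE; lra.
  case: ifP => hi.
    have := hz1 i hi; rewrite maxEle; case: ifP => h1 h2; nra.
  by rewrite hz2 ?hi // sub0r sqrrN.
have hs1 : (v^T *m x) 0 0 = \sum_i (v i 0 * x i 0).
  by rewrite mxE; apply: eq_bigr => i _; rewrite mxE.
have hs2 : (u^T *m l) 0 0 = \sum_i (u i 0 * l i 0).
  by rewrite mxE; apply: eq_bigr => i _; rewrite mxE.
have cs := @CS2 R _ _ (fun i => v i 0) (fun i => x i 0) (fun j => u j 0) (fun j => l j 0).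
rewrite /residual /pnorm /vnorm e1 hs1 hs2 !sqr_sqrtr ?addr_ge0 ?sq0 //.
rewrite -sqrtrM; last by apply: addr_ge0.
rewrite ler_sqrt; last first.
  by apply: mulr_ge0; [apply: addr_ge0 | apply: addr_ge0; [apply: addr_ge0|]].
move: cs hpm hpp (sq0 _ (fun i => v i 0)) (sq0 _ (fun i => u i 0))
  (sq0 _ (fun i => x i 0)) (sq0 _ (fun i => l i 0)) => /=.
set S := (_ + _)^+2.
move=> *; nra.
Qed.

Theorem lemma3 (R : realType) (n nb mI mE : nat)
  (A : 'M[R]_(mI + mE, n)) (b : 'cV[R]_(mI + mE)) (c : 'cV[R]_n)
  (theta : R)
  (Hnb : (1 <= nb <= n)%N)
  (Hopt : lp_has_optimal nb A b c)
  (Htheta0 : 0 <= theta)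
  (Htheta : error_bound_const nb A b c theta)
  (Htheta_min : forall t : R, 0 <= t -> error_bound_const nb A b c t -> theta <= t) :
  forall (x : 'cV[R]_n) (l : 'cV[R]_(mI + mE)),
    @nonneg_first R n nb x -> @nonneg_first R (mI + mE) mI l ->
    (pdist (x, l) (Omega nb A b c)
      <= (theta * Num.sqrt (pnorm x l ^+ 2 + 1))%:E
         * pdist (0%R, 0%R) (T_l nb A b c x l))%E.
Proof.
move=> x l Hx Hl.
have H1 := Htheta x l Hx Hl.
apply: le_trans H1 _.
set s := Num.sqrt (pnorm x l ^+ 2 + 1).
have hs : 0 < s.
  by rewrite sqrtr_gt0; have := sqr_ge0 (pnorm x l); lra.
have [->|hth] := eqVneq theta 0.
  by rewrite !mul0r mul0e.
have hpos : 0 < theta by rewrite lt_def hth Htheta0.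
have lb : ((residual nb A b c x l / s)%:E <= pdist (0%R, 0%R) (T_l nb A b c x l))%E.
  apply: le_ereal_inf_tmp => _ [[v u] Hvu <-].
  rewrite lee_fin /=.
  have -> : pnorm (0 - v) (0 - u) = pnorm v u.
    rewrite /pnorm; congr Num.sqrt; congr (_ + _); apply: eq_bigr => i _;
    by rewrite !mxE sub0r sqrrN.
  rewrite ler_pdivrMr //; exact: key_bound Hvu.
have -> : (theta * residual nb A b c x l)%:E
        = ((theta * s)%:E * (residual nb A b c x l / s)%:E)%E.
  by rewrite -EFinM; congr EFin; field; rewrite gt_eqF.
apply: lee_wpmul2l => //; rewrite lee_fin; exact: mulr_ge0 (ltW hs).
Qed.
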